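(* Assume the standing hypotheses (H). Let $A$ be a part of $G$ with $|A|=4$, and let $L_A$ be the set of colors $c$ such that $c\in L(u)\cap L(v)$ for some good pair $\{u,v\}$ for $A$. Then $|L_A|\ge k_3+k_4$.
   Context: A list assignment $L$ assigns to each vertex $v$ a set $L(v)$ of colors; an $L$-coloring is a proper coloring $f$ with $f(v)\in L(v)$ for all $v$; $\mathrm{ch}$ denotes choice number and $\chi$ chromatic number. A part of a complete multipartite graph is one of its maximal stable sets. Standing hypotheses (H): $k\ge1$ and $n\ge 2k+2$ are integers; $G$ is a complete $k$-partite graph (exactly $k$ nonempty parts) on $n$ vertices; $L$ is a list assignment for $G$ with $|L(v)|\ge\lceil (n+k-1)/3\rceil$ for every vertex $v$; $G$ has no $L$-coloring; $\left|\bigcup_{v\in V(G)}L(v)\right|\le n-1$; and every graph $H$ with fewer than $n$ vertices satisfies $\mathrm{ch}(H)\le\max\{\chi(H),\lceil(|V(H)|+\chi(H)-1)/3\rceil\}$. For $i\in\{1,2,3,4\}$, $k_i$ denotes the number of parts of $G$ of size $i$. For a part $A$ with $|A|\ge3$, a pair $\{u,v\}\subseteq A$ of distinct vertices is a good pair for $A$ if either $|A|=3$ and $|L(u)\cap L(v)|\ge\frac{k_1+k_4+1}{3}$, or $|A|=4$ and $|L(u)\cap L(v)|\ge|L(w)\cap L(z)|$ where $\{w,z\}=A\setminus\{u,v\}$. *)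

(* Defs.v *)
From HB Require Import structures.
From mathcomp Require Import all_boot.
Set Implicit Arguments. Unset Strict Implicit. Unset Printing Implicit Defensive.

Definition ceil_div (a b : nat) : nat := (a + b - 1) %/ b.

Record sgraph (V : finType) := SGraph {
  adj : rel V;
  adj_sym : symmetric adj;
  adj_irr : irreflexive adj }.

Definition proper_col (V : finType) (C : Type) (e : rel V) (f : V -> C) : Prop :=
  forall u v, e u v -> f u <> f v.

Definition colorable (V : finType) (G : sgraph V) (m : nat) : Prop :=
  exists f : V -> 'I_m, proper_col (adj G) f.

Definition colorableb (V : finType) (G : sgraph V) (m : nat) : bool :=
  [exists f : {ffun V -> 'I_m}, [forall u, forall v, adj G u v ==> (f u != f v)]].

Lemma colorable_ex (V : finType) (G : sgraph V) : exists m, colorableb G m.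
Proof.
exists #|V|; apply/existsP; exists [ffun v => enum_rank v].
apply/forallP => u; apply/forallP => v; apply/implyP => Huv.
rewrite !ffunE; apply/negP => /eqP/enum_rank_inj Heq.
by move: Huv; rewrite Heq (adj_irr G).
Qed.

Definition chi (V : finType) (G : sgraph V) : nat := ex_minn (colorable_ex G).

(* G is t-choosable (i.e. ch(G) <= t): every list assignment with all lists
   of size >= t, over any (finite) color set, admits an L-coloring *)
Definition choosable (V : finType) (G : sgraph V) (t : nat) : Prop :=
  forall (C : finType) (L : V -> {set C}), (forall v, t <= #|L v|) ->
    exists f : V -> C, (forall v, f v \in L v) /\ proper_col (adj G) f.

(* Complete k-partite graph given by a part map p : V -> 'I_k:
   u ~ v iff they lie in different parts. *)
Definition cmp_adj (V : finType) (k : nat) (p : V -> 'I_k) : rel V :=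
  fun u v => p u != p v.

Definition part (V : finType) (k : nat) (p : V -> 'I_k) (a : 'I_k) : {set V} :=
  [set v | p v == a].

Definition kcount (V : finType) (k : nat) (p : V -> 'I_k) (i : nat) : nat :=
  #|[set j : 'I_k | #|part p j| == i]|.

Definition good_pair (V C : finType) (k : nat) (p : V -> 'I_k) (L : V -> {set C})
    (a : 'I_k) (u v : V) : bool :=
  [&& p u == a, p v == a, u != v &
    ((#|part p a| == 3) &&
       (kcount p 1 + kcount p 4 + 1 <= 3 * #|L u :&: L v|))
    || ((#|part p a| == 4) &&
       [forall w, forall z,
          [&& p w == a, p z == a, w != z, w \notin [set u; v] & z \notin [set u; v]]
          ==> (#|L w :&: L z| <= #|L u :&: L v|)])].

Definition LA (V C : finType) (k : nat) (p : V -> 'I_k) (L : V -> {set C})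
    (a : 'I_k) : {set C} :=
  [set c | [exists u, exists v, good_pair p L a u v && (c \in L u :&: L v)]].

(* Main.v *)
Require Import Defs.
From HB Require Import structures.
From mathcomp Require Import all_boot zify.

Lemma kcountE (V : finType) k (p : V -> 'I_k) i :
  kcount p i = \sum_(j < k) (#|part p j| == i).
Proof.
rewrite /kcount -sum1_card big_mkcond /=.
by apply: eq_bigr => j _; rewrite inE; case: eqP.
Qed.

Lemma sum_part (V : finType) k (p : V -> 'I_k) :
  \sum_(j < k) #|part p j| = #|V|.
Proof.
rewrite -sum1_card (partition_big p xpredT) //=.
apply: eq_bigr => j _; rewrite -sum1_card; apply: eq_bigl => v; rewrite !inE.
by [].
Qed.

Lemma kfacts (V : finType) k (p : V -> 'I_k) a :
  (forall j : 'I_k, exists v : V, p v = j) -> #|part p a| = 4 ->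
  [/\ k + 2 * kcount p 3 + 3 * kcount p 4 <= #|V|,
      kcount p 3 + kcount p 4 <= k & 1 <= kcount p 4].
Proof.
move=> hs h4; split.
- rewrite -(@sum_part _ _ p) !kcountE.
  rewrite -{1}[k]card_ord -sum1_card.
  rewrite !big_distrr -!big_split /=; apply: leq_sum => j _.
  have : 0 < #|part p j|.
    by case: (hs j) => v hv; apply/card_gt0P; exists v; rewrite inE hv.
  by move: (#|part p j|) => s; case: s => [|[|[|[|[|s]]]]].
- rewrite !kcountE -big_split /=.
  rewrite -[X in _ <= X]card_ord -sum1_card; apply: leq_sum => j _.
  by move: (#|part p j|) => s; case: s => [|[|[|[|[|s]]]]].
- by apply/card_gt0P; exists a; rewrite inE h4.
Qed.
Lemma ar_final {n k k3 k4 t l1 l2 l3 l4 u s m la : nat} :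
  1 <= k -> 2 * k + 2 <= n -> k + 2 * k3 + 3 * k4 <= n -> k3 + k4 <= k -> 0 < k4 ->
  (n + k - 1 + 3 - 1) %/ 3 <= l1 -> (n + k - 1 + 3 - 1) %/ 3 <= l2 ->
  (n + k - 1 + 3 - 1) %/ 3 <= l3 -> (n + k - 1 + 3 - 1) %/ 3 <= l4 ->
  l1 + l2 + l3 + l4 <= u + s -> u <= n - 1 -> s <= 2 * m -> m <= la ->
  k3 + k4 <= la.
Proof. lia. Qed.
Lemma ar_cM {a b c u v w : nat} : u + 0 = a + b -> w + 0 = u + c -> w <= v -> a + b + c <= v.
Proof. lia. Qed.
Lemma ar_bon {l1 l2 l3 l4 u2 u3 u4 i12 i13 i23 i14 i24 i34 x y z : nat} :
  u2 + i12 = l1 + l2 -> u3 + x = u2 + l3 -> u4 + y = u3 + l4 ->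
  x <= i13 + i23 -> y <= z + i34 -> z <= i14 + i24 ->
  l1 + l2 + l3 + l4 <= u4 + (i12 + i34 + (i13 + i24) + (i14 + i23)).
Proof. lia. Qed.
Lemma ar_s {x1 x2 x3 m1 m2 m3 : nat} : x1 <= 2 * m1 -> x2 <= 2 * m2 -> x3 <= 2 * m3 -> x1 + x2 + x3 <= 2 * (m1 + m2 + m3).
Proof. lia. Qed.

Lemma no_triple (k n : nat) (V C : finType) (p : V -> 'I_k) (L : V -> {set C}) :
  1 <= k -> 2 * k + 2 <= n -> #|V| = n ->
  (forall v, ceil_div (n + k - 1) 3 <= #|L v|) ->
  ~ (exists f : V -> C, (forall v, f v \in L v) /\ proper_col (cmp_adj p) f) ->
  (forall (W : finType) (H : sgraph W), #|W| < n ->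
      choosable H (maxn (chi H) (ceil_div (#|W| + chi H - 1) 3))) ->
  forall c x y z, p x = p y -> p y = p z -> x != y -> x != z -> y != z ->
  c \in L x -> c \in L y -> c \in L z -> False.
Proof.
move=> hk hn hV hL hnc IH c x y z pxy pyz nxy nxz nyz cx cy cz.
pose P := fun v : V => [&& v != x, v != y & v != z].
pose W : finType := {v : V | P v}.
have adjsym : symmetric (fun u v : W => cmp_adj p (val u) (val v)).
  by move=> u v; rewrite /cmp_adj eq_sym.
have adjirr : irreflexive (fun u v : W => cmp_adj p (val u) (val v)).
  by move=> u; rewrite /cmp_adj eqxx.
pose H := @SGraph W _ adjsym adjirr.
have hW : #|W| = n - 3.
  rewrite card_sig.
  have -> : #|[pred v | P v]| = #|((setT :\ x) :\ y) :\ z|.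
    apply: eq_card => v; rewrite !inE /P andbT.
    by case: (v == x); case: (v == y); case: (v == z).
  have nyx : y != x by rewrite eq_sym.
  have nzx : z != x by rewrite eq_sym.
  have nzy : z != y by rewrite eq_sym.
  move: (cardsD1 x setT) (cardsD1 y (setT :\ x)) (cardsD1 z (setT :\ x :\ y)).
  rewrite !inE nyx nzx nzy cardsT hV /=; lia.
have hchi : chi H <= k.
  rewrite /chi; case: ex_minnP => m _ hmin; apply: hmin.
  apply/existsP; exists [ffun u : W => p (val u)].
  apply/forallP => u; apply/forallP => v; apply/implyP => /=.
  by rewrite !ffunE.
have hcho := IH W H (ltac:(rewrite hW; lia)).
pose L' := fun u : W => L (val u) :\ c.
have [f' [f'L f'p]] : exists f' : W -> C, (forall u, f' u \in L' u) /\ proper_col (adj H) f'.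
  apply: hcho => u; have := cardsD1 c (L (val u)); have := hL (val u).
  rewrite /L' /ceil_div hW; case: (c \in L (val u)) => /=; lia.
apply: hnc; exists (fun v => if insub v is Some u then f' u else c); split.
- move=> v; case: insubP => [u _ <-|].
    by move: (f'L u); rewrite /L' inE => /andP[].
  by rewrite /P !negb_and !negbK => /or3P [] /eqP ->.
- have inT : forall v, ~~ P v -> p v = p x.
    by move=> v; rewrite /P !negb_and !negbK => /or3P [] /eqP -> //; rewrite pxy.
  move=> u v huv; case: insubP => [u' Pu eu|nPu]; case: insubP => [v' Pv ev|nPv].
  + by apply: f'p; rewrite /= /cmp_adj eu ev.
  + move: (f'L u'); rewrite /L' !inE => /andP[/eqP hne _]; exact: hne.
  + move: (f'L v'); rewrite /L' !inE => /andP[/eqP hne _] heq; apply: hne; by rewrite -heq.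
  + by move: huv; rewrite /cmp_adj (inT _ nPu) (inT _ nPv) eqxx.
Qed.

Lemma good4 (V C : finType) k (p : V -> 'I_k) (L : V -> {set C}) a u v w z :
  #|part p a| = 4 -> p u == a -> p v == a -> u != v -> w != z ->
  (forall x, p x == a -> [|| x == u, x == v, x == w | x == z]) ->
  #|L w :&: L z| <= #|L u :&: L v| -> good_pair p L a u v.
Proof.
move=> h4 pu pv nuv nwz hA hle.
rewrite /good_pair pu pv nuv h4 /=.
apply/forallP => w'; apply/forallP => z'; apply/implyP => /and5P [pw pz nwz' nw nz].
rewrite !inE in nw nz.
move: (hA _ pw) (hA _ pz) nw nz nwz'.
case/or4P => /eqP ->; case/or4P => /eqP ->; rewrite ?eqxx ?orbT ?orTb //= => *.
all: try by [].
all: by rewrite setIC.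
Qed.

Theorem lemma31 (k n : nat) (V C : finType) (p : V -> 'I_k)
    (L : V -> {set C}) (a : 'I_k) :
  1 <= k ->
  2 * k + 2 <= n ->
  #|V| = n ->
  (forall j : 'I_k, exists v : V, p v = j) ->
  (forall v, ceil_div (n + k - 1) 3 <= #|L v|) ->
  ~ (exists f : V -> C, (forall v, f v \in L v) /\ proper_col (cmp_adj p) f) ->
  #|\bigcup_(v : V) L v| <= n - 1 ->
  (forall (W : finType) (H : sgraph W), #|W| < n ->
      choosable H (maxn (chi H) (ceil_div (#|W| + chi H - 1) 3))) ->
  #|part p a| = 4 ->
  kcount p 3 + kcount p 4 <= #|LA p L a|.
Proof.
move=> hk hn hV hs hL hnc hU IH h4.
have NT := @no_triple k n V C p L hk hn hV hL hnc IH.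
have [kf1 kf2 kf3] := @kfacts V k p a hs h4.
have hsz : size (enum (part p a)) = 4 by rewrite -cardE h4.
have U := enum_uniq (part p a).
have memA : forall x, (x \in enum (part p a)) = (p x == a).
  by move=> x; rewrite mem_enum inE.
move: hsz U memA.
case: (enum (part p a)) => [|a1 [|a2 [|a3 [|a4 [|? ?]]]]] //= _ U memA.
have hA : forall x, p x == a -> [|| x == a1, x == a2, x == a3 | x == a4].
  by move=> x; rewrite -memA !inE.
have pa1 : p a1 == a by rewrite -memA !inE eqxx.
have pa2 : p a2 == a by rewrite -memA !inE eqxx ?orbT.
have pa3 : p a3 == a by rewrite -memA !inE eqxx ?orbT.
have pa4 : p a4 == a by rewrite -memA !inE eqxx ?orbT.
move: U; rewrite !inE !negb_or => /and4P [/and3P[n12 n13 n14] /andP[n23 n24] n34 _].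
have n21 : a2 != a1 by rewrite eq_sym.
have n31 : a3 != a1 by rewrite eq_sym.
have n41 : a4 != a1 by rewrite eq_sym.
have n32 : a3 != a2 by rewrite eq_sym.
have n42 : a4 != a2 by rewrite eq_sym.
have n43 : a4 != a3 by rewrite eq_sym.
have R := (negbTE n12, negbTE n13, negbTE n14, negbTE n23, negbTE n24, negbTE n34,
           (negbTE n21, negbTE n31, negbTE n41, negbTE n32, negbTE n42, negbTE n43)).
have D : forall x y z w, p x == a -> p y == a -> p z == a -> p w == a ->
    x != y -> z != w -> ~~ ((x == z) && (y == w)) -> ~~ ((x == w) && (y == z)) ->
    (L x :&: L y) :&: (L z :&: L w) = set0.
  move=> x y z w px py pz pw nxy nzw c1 c2.
  apply/setP => c; rewrite !inE; apply/negP => /andP[/andP[cx cy] /andP[cz cw]].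
  have [zxy|zn] := boolP ((z == x) || (z == y)).
  - case/orP: zxy => /eqP ez; subst z.
    + rewrite eqxx /= in c1.
      apply: (NT c x y w) => //; by [rewrite (eqP px) (eqP py) | rewrite (eqP py) (eqP pw) | rewrite (eqP py) (eqP pz) | rewrite eq_sym].
    + rewrite eqxx andbT in c2.
      apply: (NT c x y w) => //; by [rewrite (eqP px) (eqP py) | rewrite (eqP py) (eqP pw) | rewrite (eqP py) (eqP pz) | rewrite eq_sym].
  - rewrite negb_or in zn; case/andP: zn => zx zy.
    apply: (NT c x y z) => //; by [rewrite (eqP px) (eqP py) | rewrite (eqP py) (eqP pw) | rewrite (eqP py) (eqP pz) | rewrite eq_sym].
have pick : forall u v w z, p u == a -> p v == a -> p w == a -> p z == a ->
    u != v -> w != z ->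
    (forall x, p x == a -> [|| x == u, x == v, x == w | x == z]) ->
    exists M : {set C}, [/\ M \subset LA p L a,
              #|L u :&: L v| + #|L w :&: L z| <= 2 * #|M| &
              M = L u :&: L v \/ M = L w :&: L z].
  move=> u v w z pu pv pw pz nuv nwz hX.
  have sub : forall x y, good_pair p L a x y -> L x :&: L y \subset LA p L a.
    move=> x y g; apply/subsetP => c hc; rewrite inE.
    by apply/existsP; exists x; apply/existsP; exists y; rewrite g hc.
  case: (leqP #|L w :&: L z| #|L u :&: L v|) => hle.
  - exists (L u :&: L v); split; [|by rewrite mul2n -addnn leq_add2l|by left].
    by apply: sub; apply: good4 hle.
  - exists (L w :&: L z); split; [|by rewrite mul2n -addnn leq_add2r ltnW|by right].
    apply: sub; apply: good4 (ltnW hle) => // x /hX.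
    by case/or4P => ->; rewrite ?orbT.
have [M1 [s1 c1 e1]] := pick a1 a2 a3 a4 pa1 pa2 pa3 pa4 n12 n34 hA.
have [M2 [s2 c2 e2]] := pick a1 a3 a2 a4 pa1 pa3 pa2 pa4 n13 n24
  (fun x hx => ltac:(by case/or4P: (hA x hx) => ->; rewrite ?orbT)).
have [M3 [s3 c3 e3]] := pick a1 a4 a2 a3 pa1 pa4 pa2 pa3 n14 n23
  (fun x hx => ltac:(by case/or4P: (hA x hx) => ->; rewrite ?orbT)).
have d12 : M1 :&: M2 = set0.
  by case: e1 => ->; case: e2 => ->; apply: D => //; rewrite ?eqxx ?R.
have d13 : M1 :&: M3 = set0.
  by case: e1 => ->; case: e3 => ->; apply: D => //; rewrite ?eqxx ?R.
have d23 : M2 :&: M3 = set0.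
  by case: e2 => ->; case: e3 => ->; apply: D => //; rewrite ?eqxx ?R.
have cM : #|M1| + #|M2| + #|M3| <= #|LA p L a|.
  have f1 := cardsUI M1 M2; rewrite d12 cards0 in f1.
  have f2 := cardsUI (M1 :|: M2) M3; rewrite setIUl d13 d23 setU0 cards0 in f2.
  apply: (ar_cM f1 f2); apply: subset_leq_card; by rewrite !subUset s1 s2 s3.
have bon : #|L a1| + #|L a2| + #|L a3| + #|L a4| <=
    #|L a1 :|: L a2 :|: L a3 :|: L a4| +
    (#|L a1 :&: L a2| + #|L a3 :&: L a4| + (#|L a1 :&: L a3| + #|L a2 :&: L a4|)
     + (#|L a1 :&: L a4| + #|L a2 :&: L a3|)).
  have g1 := cardsUI (L a1) (L a2).
  have g2 := cardsUI (L a1 :|: L a2) (L a3). rewrite setIUl in g2.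
  have g3 := cardsUI (L a1 :|: L a2 :|: L a3) (L a4). rewrite !setIUl in g3.
  exact: (ar_bon g1 g2 g3 (leq_card_setU _ _).1 (leq_card_setU _ _).1 (leq_card_setU _ _).1).
have hU4 : #|L a1 :|: L a2 :|: L a3 :|: L a4| <= n - 1.
  apply: leq_trans hU; apply: subset_leq_card.
  by rewrite !subUset !(bigcup_sup _ (erefl true)).
rewrite hV in kf1.
exact: (ar_final hk hn kf1 kf2 kf3 (hL a1) (hL a2) (hL a3) (hL a4) bon hU4 (ar_s c1 c2 c3) cM).
Qed.
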